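(* For every $n\geq 4$, $c_0(W_n)=2$.
   Context: The wheel $W_n$ ($n\geq 4$) is the cycle $C_{n-1}$ together with one additional vertex adjacent to all cycle vertices. Graphs are reflexive (a player may stay in place). The 0-visibility game: $k$ cops and one robber; cops choose starting vertices, then the robber; in each round all cops move (each to an adjacent vertex or staying), then the robber moves. The cops never see the robber (the game ends when a cop occupies the robber's vertex), while the robber sees everything and knows the cops' strategy in advance; hence a cop strategy is a fixed sequence of positions of the cops, consecutive positions of each cop being equal or adjacent, and it is winning if every robber walk is caught after finitely many rounds. The 0-visibility cop number $c_0(G)$ is the least $k$ for which $k$ cops have a winning strategy. *)

(* Defs.v *)
From mathcomp Require Import all_boot.
Set Implicit Arguments. Unset Strict Implicit. Unset Printing Implicit Defensive.

(* Wheel W_n on vertex set 'I_n: vertex 0 is the hub, vertices 1..n-1 form the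
   cycle C_{n-1} (vertex i is adjacent to i+1, indices of the cycle taken mod n-1). *)
Definition wheel_adj (n : nat) : rel 'I_n :=
  fun x y =>
    [|| x == y, nat_of_ord x == 0, nat_of_ord y == 0 |
     [&& 0 < x, 0 < y &
         ((x.-1).+1 %% n.-1 == y.-1) || ((y.-1).+1 %% n.-1 == x.-1)]].

(* A cop strategy for k cops: the sequence s t of positions of the cops after
   their move in round t (s 0 = starting positions); each cop moves along
   adjacency (or stays, graph being reflexive). *)
Definition cop_strategy (V : finType) (adj : rel V) (k : nat)
  (s : nat -> 'I_k -> V) : Prop :=
  forall t (i : 'I_k), adj (s t i) (s t.+1 i).

(* A robber walk: r 0 is the starting vertex, r t the position after the
   robber's move in round t. *)
Definition robber_walk (V : finType) (adj : rel V) (r : nat -> V) : Prop :=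
  forall t, adj (r t) (r t.+1).

(* The robber is caught: at some time a cop stands on the robber's vertex,
   either right after the robber placed/moved (s t i = r t) or right after
   the cops' next move (s t.+1 i = r t). *)
Definition caught (V : finType) (k : nat) (s : nat -> 'I_k -> V)
  (r : nat -> V) : Prop :=
  exists t, exists i : 'I_k, s t i = r t \/ s t.+1 i = r t.

Definition zero_vis_win (V : finType) (adj : rel V) (k : nat) : Prop :=
  exists s : nat -> 'I_k -> V, cop_strategy adj s /\
    forall r : nat -> V, robber_walk adj r -> caught s r.

Definition c0_eq (V : finType) (adj : rel V) (k : nat) : Prop :=
  zero_vis_win adj k /\ forall j, j < k -> ~ zero_vis_win adj j.

(* Main.v *)
Require Import Defs.
From mathcomp Require Import all_boot.
From mathcomp Require Import zify.
From Stdlib Require Import Classical.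

Section W.
Variable n : nat.
Local Notation N := n.+4.

Lemma modS (k : nat) : k < n.+3 ->
  k.+1 %% n.+3 = if k.+1 == n.+3 then 0 else k.+1.
Proof.
move=> hk; case: eqP => [->|ne]; first by rewrite modnn.
by rewrite modn_small //; lia.
Qed.

Lemma adj_inv (x y : 'I_N) : wheel_adj x y -> 0 < x -> 0 < y ->
  (x:nat) = y \/ x.+1 = y \/ y.+1 = x \/ ((x:nat) = n.+3 /\ (y:nat) = 1)
  \/ ((y:nat) = n.+3 /\ (x:nat) = 1).
Proof.
have hx := ltn_ord x; have hy := ltn_ord y.
rewrite /wheel_adj /= => h px py.
case/or4P: h => [/eqP->|/eqP e|/eqP e|/and3P[_ _ /orP[]]];
  try (left; done); try lia.
- rewrite modS; last lia.
  move/eqP; case: ifP => /eqP e e2; lia.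
- rewrite modS; last lia.
  move/eqP; case: ifP => /eqP e e2; lia.
Qed.

Definition hub : 'I_N := ord0.
Definition two : 'I_N := inord 2.
Definition Bp (t : nat) : 'I_N :=
  inord (if t == 0 then 1 else N - minn t (N - 3)).
Definition strat (t : nat) (i : 'I_2) : 'I_N :=
  if i == ord0 then (if odd t then two else hub) else Bp t.

Lemma val_two : (two : nat) = 2.
Proof. by rewrite /two inordK. Qed.

Lemma val_Bp t : (Bp t : nat) = if t == 0 then 1 else N - minn t (N - 3).
Proof. rewrite /Bp inordK //; case: ifP => /eqP ?; lia. Qed.

Lemma hub_adj (x : 'I_N) : wheel_adj hub x /\ wheel_adj x hub.
Proof. by rewrite /wheel_adj /= !orbT. Qed.

Lemma cyc_adj (x y : 'I_N) : 0 < x -> 0 < y ->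
  (x:nat) = y \/ (y:nat) = x.+1 \/ ((x:nat) = n.+3 /\ (y:nat) = 1) \/ (x:nat) = y.+1
  \/ ((y:nat) = n.+3 /\ (x:nat) = 1) ->
  wheel_adj x y.
Proof.
move=> px py h; have hx := ltn_ord x; have hy := ltn_ord y.
case: (eqVneq x y) => [->|ne]; first by rewrite /wheel_adj eqxx.
rewrite /wheel_adj; apply/orP; right; apply/orP; right; apply/orP; right.
apply/and3P; split => //.
case: h => [e|[e|[e|[e|e]]]].
- by case/eqP: ne; apply: val_inj.
- apply/orP; left; rewrite modS; last lia. apply/eqP; case: ifP => /eqP; lia.
- apply/orP; left; rewrite modS; last lia. apply/eqP; case: ifP => /eqP; lia.
- apply/orP; right; rewrite modS; last lia. apply/eqP; case: ifP => /eqP; lia.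
- apply/orP; right; rewrite modS; last lia. apply/eqP; case: ifP => /eqP; lia.
Qed.

Lemma strat_ok : cop_strategy (@wheel_adj N) strat.
Proof.
move=> t i; rewrite /strat; case: eqP => _.
  rewrite /=; case: (odd t) => /=; [exact: (hub_adj _).2 | exact: (hub_adj _).1].
have h1 := val_Bp t; have h2 := val_Bp t.+1.
move: h2; rewrite /= => h2.
apply: cyc_adj; [rewrite h1; case: ifP => /eqP ?; lia|rewrite h2; lia|].
rewrite h1 h2; case: ifP => /eqP ?; lia.
Qed.

Lemma strat_win : forall r, robber_walk (@wheel_adj N) r -> caught strat r.
Proof.
move=> r hr; apply: NNPP => nc.
have av : forall t (i : 'I_2), strat t i <> r t /\ strat t.+1 i <> r t.
  move=> t i; split => e; apply: nc; exists t, i; by [left|right].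
have nz : forall t, 0 < r t.
  move=> t; rewrite lt0n; apply/eqP => e.
  have [a b] := av t ord0; move: a b; rewrite /strat /=.
  case: (odd t) => /= a b; [apply: b|apply: a]; apply: val_inj; by rewrite /= e.
have n2 : forall t, (r t : nat) != 2.
  move=> t; apply/eqP => e.
  have [a b] := av t ord0; move: a b; rewrite /strat /=.
  case: (odd t) => /= a b; [apply: a|apply: b]; apply: val_inj; by rewrite /= e val_two.
have nb : forall t, (r t : nat) <> Bp t /\ (r t : nat) <> Bp t.+1.
  move=> t; have [a b] := av t (lift ord0 ord0); move: a b; rewrite /strat /=.
  move=> a b; split => e; [apply: a|apply: b]; exact: val_inj.
have inv : forall t, t <= N - 3 -> 3 <= r t /\ r t + t < N.
  elim=> [_|t IH ht].
    have := nz 0; have := n2 0; have := nb 0; rewrite !val_Bp /=.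
    have := ltn_ord (r 0); move=> ? [? ?] /eqP ? ?. lia.
  have [IH1 IH2] := IH (ltnW ht).
  have [a1 a2] := nb t; have [b1 b2] := nb t.+1.
  move: a2 b1; rewrite !val_Bp /= => a2 b1.
  have := n2 t; have := n2 t.+1; move=> /eqP c1 /eqP c2.
  have := ltn_ord (r t.+1) => c3.
  have := @adj_inv _ _ (hr t) (nz t) (nz t.+1). lia.
have [h1 h2] := inv (N - 3) (leqnn _). lia.
Qed.

Lemma exists_avoid (x a b : 'I_N) : exists y, wheel_adj x y && (y != a) && (y != b).
Proof.
have key : forall y1 y2 y3 : 'I_N, y1 != y2 -> y1 != y3 -> y2 != y3 ->
  wheel_adj x y1 -> wheel_adj x y2 -> wheel_adj x y3 ->
  exists y, wheel_adj x y && (y != a) && (y != b).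
  move=> y1 y2 y3 d12 d13 d23 h1 h2 h3.
  have fin : forall y, wheel_adj x y -> y != a -> y != b ->
      exists y, wheel_adj x y && (y != a) && (y != b).
    by move=> y hy ya yb; exists y; rewrite hy ya yb.
  case: (eqVneq y1 a) => [e1|n1]; last case: (eqVneq y1 b) => [f1|m1];
    last by apply: fin h1 n1 m1.
  - subst a; case: (eqVneq y2 b) => [f2|m2].
      subst b; apply: fin h3 _ _; by rewrite eq_sym.
    apply: fin h2 _ m2; by rewrite eq_sym.
  - subst b; case: (eqVneq y2 a) => [f2|m2].
      subst a; apply: fin h3 _ _; by rewrite eq_sym.
    apply: fin h2 m2 _; by rewrite eq_sym.
case: (eqVneq (x : nat) 0) => [x0|xn].
  apply: (key hub (inord 1) two);
    try (by rewrite /wheel_adj x0 /= !orbT);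
    rewrite -val_eqE /= ?val_two ?inordK //.
pose sx : 'I_N := inord (if (x:nat) == n.+3 then 1 else (x:nat).+1).
have hx := ltn_ord x.
have vs : (sx : nat) = if (x:nat) == n.+3 then 1 else (x:nat).+1.
  rewrite /sx inordK //; case: ifP => /eqP ?; lia.
apply: (key hub x sx).
- apply/eqP => E; move: xn; by rewrite -E.
- apply/eqP => E; have := congr1 (@nat_of_ord _) E; rewrite vs /=.
  case: ifP => /eqP ?; lia.
- apply/eqP => E; have := congr1 (@nat_of_ord _) E; rewrite vs /=.
  case: ifP => /eqP ?; lia.
- exact: (hub_adj _).2.
- by rewrite /wheel_adj eqxx.
- rewrite /wheel_adj; apply/orP; right; apply/orP; right; apply/orP; right.
  apply/and3P; split; [lia|rewrite vs; case: ifP => /eqP ?; lia|].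
  apply/orP; left; rewrite vs modS; last lia.
  case: ifP => /eqP e; case: ifP => /eqP e'; lia.
Qed.

Lemma one_cop_loses : ~ zero_vis_win (@wheel_adj N) 1.
Proof.
move=> [s [_ hs]].
pose i0 : 'I_1 := ord0.
pose good t (y : 'I_N) := (y != s t i0) && (y != s t.+1 i0).
pose nxt t (x : 'I_N) := odflt x [pick y | wheel_adj x y && good t y].
have nxtP : forall t x, wheel_adj x (nxt t x) && good t (nxt t x).
  move=> t x; rewrite /nxt; case: pickP => [y -> //|none].
  have [y hy] := exists_avoid x (s t i0) (s t.+1 i0).
  by move: (none y); rewrite /good andbA hy.
pose r := fix r t := if t is t'.+1 then nxt t (r t') else nxt 0 hub.
have hr : forall t, good t (r t).
  by case=> [|t]; [case/andP: (nxtP 0 hub) | case/andP: (nxtP t.+1 (r t))].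
have [t [i hi]] : caught s r.
  apply: hs => t; by case/andP: (nxtP t.+1 (r t)).
have ei : i = i0 by apply: val_inj; case: (i) => [[]].
subst i; move: (hr t); rewrite /good; case: hi => ->; by rewrite eqxx ?andbF.
Qed.

End W.

Theorem mainTheorem19 (n : nat) (hn : 4 <= n) : c0_eq (@wheel_adj n) 2.
Proof.
case: n hn => [|[|[|[|n]]]] // _.
split.
  exists (@strat n); split; [exact: strat_ok | exact: strat_win].
move=> j; case: j => [_|[_|//]].
  move=> [s [_ hs]].
  have [t [i _]] := hs (fun _ => hub n) (fun t => ltac:(by rewrite /wheel_adj eqxx)).
  by case: i.
exact: one_cop_loses.
Qed.
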